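(* Let $p\geq 1$ and let $n_0<n_1<\cdots<n_p$ be positive integers with $n_i=n_0+id$ for a fixed positive integer $d$, such that $\gcd(n_0,\dots,n_p)=1$ and $\{n_0,\dots,n_p\}$ minimally generates the numerical semigroup $S_1=\langle n_0,\dots,n_p\rangle$. Then the Apéry set $\mathrm{Ap}(S_1,n_p)$ is a homogeneous subset of $S_1$.
   Context: For a numerical semigroup $T=\langle n_0,\dots,n_p\rangle$ and $0\neq a\in T$, the Apéry set is $\mathrm{Ap}(T,a)=\{s\in T: s-a\notin T\}$. For $0\neq s\in T$, the set of lengths is $\mathcal{L}(s)=\{\sum_{i=0}^p\lambda_i : s=\sum_{i=0}^p\lambda_in_i,\ \lambda_i\in\mathbb{N}\}$. A subset $A\subseteq T$ is homogeneous if it is empty or $\mathcal{L}(s)$ is a singleton for every $0\neq s\in A$. *)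

(* Defs.v *)
From mathcomp Require Import all_boot.
Set Implicit Arguments. Unset Strict Implicit. Unset Printing Implicit Defensive.

(* A numerical semigroup T = <g 0, ..., g p> is given by its generator
   function g : nat -> nat (only indices 0..p matter). *)

Definition in_sgp (g : nat -> nat) (p s : nat) : Prop :=
  exists lam : nat -> nat, s = \sum_(i < p.+1) lam i * g i.

Definition lengths (g : nat -> nat) (p s : nat) (l : nat) : Prop :=
  exists lam : nat -> nat,
    s = \sum_(i < p.+1) lam i * g i /\ l = \sum_(i < p.+1) lam i.

(* Apery set Ap(T, a) = { s in T : s - a not in T } (s - a integer difference:
   if s < a then s - a is negative, hence not in T). *)
Definition apery (g : nat -> nat) (p a s : nat) : Prop :=
  in_sgp g p s /\ ~ (a <= s /\ in_sgp g p (s - a)).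

Definition homogeneous_subset (g : nat -> nat) (p : nat) (A : nat -> Prop) : Prop :=
  (forall s, A s -> in_sgp g p s) /\
  (forall s, A s -> s <> 0 -> exists l, forall l', lengths g p s l' <-> l' = l).

Definition minimal_gens (g : nat -> nat) (p : nat) : Prop :=
  forall j : 'I_p.+1, ~ exists lam : nat -> nat,
      g j = \sum_(i < p.+1 | i != j) lam i * g i.

Definition gcd_gens (g : nat -> nat) (p : nat) : nat := \big[gcdn/0]_(i < p.+1) g i.

(* Main.v *)
Require Import Defs.
From mathcomp Require Import all_boot.
From mathcomp Require Import zify.

Set Implicit Arguments. Unset Strict Implicit. Unset Printing Implicit Defensive.

Lemma sum_val (p n0 d : nat) (lam : nat -> nat) :
  \sum_(i < p.+1) lam i * (n0 + i * d) =
  n0 * (\sum_(i < p.+1) lam i) + d * (\sum_(i < p.+1) lam i * i).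
Proof.
rewrite !big_distrr -big_split /=; apply: eq_bigr => i _; lia.
Qed.

Lemma sumA_le (p : nat) (lam : nat -> nat) :
  \sum_(i < p.+1) lam i * i <= p * \sum_(i < p.+1) lam i.
Proof.
rewrite big_distrr /=; apply: leq_sum => i _.
have := ltn_ord i; nia.
Qed.

Lemma sum_ind (p j : nat) (F : nat -> nat) : j < p.+1 ->
  \sum_(i < p.+1) (((i : nat) == j) : nat) * F i = F j.
Proof.
move=> Hj; rewrite (bigD1 (Ordinal Hj)) //= eqxx mul1n big1 ?addn0 //.
move=> i Hi; have -> : ((i : nat) == j) = false.
  by apply/negbTE; apply: contra Hi => /eqP Hij; apply/eqP/val_inj.
by [].
Qed.

Lemma realize (p : nat) : forall L A, A <= p * L ->
  exists mu : nat -> nat, \sum_(i < p.+1) mu i = L /\ \sum_(i < p.+1) mu i * i = A.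
Proof.
elim=> [|L IH] A HA.
  exists (fun _ => 0); rewrite !big1 //; lia.
have [mu [H1 H2]] := IH (A - minn A p) ltac:(lia).
exists (fun i : nat => mu i + ((i == minn A p) : nat)).
have Hj : minn A p < p.+1 by lia.
split.
  rewrite big_split /= H1.
  have h := sum_ind (fun _ => 1) Hj.
  have -> : \sum_(i < p.+1) (((i : nat) == minn A p) : nat) = 1.
    by rewrite -[RHS]h; apply: eq_bigr => i _; rewrite muln1.
  lia.
under eq_bigr do rewrite mulnDl.
rewrite big_split /= H2 (sum_ind (fun i => i) Hj); lia.
Qed.

Theorem lemma4p3 (p n0 d : nat) :
  1 <= p -> 0 < n0 -> 0 < d ->
  gcd_gens (fun i => n0 + i * d) p = 1 ->
  minimal_gens (fun i => n0 + i * d) p ->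
  homogeneous_subset (fun i => n0 + i * d) p
    (apery (fun i => n0 + i * d) p (n0 + p * d)).
Proof.
move=> Hp Hn0 Hd _ Hmin.
have Asmall : forall s (lam : nat -> nat), apery (fun i => n0 + i * d) p (n0 + p * d) s ->
    s = \sum_(i < p.+1) lam i * (n0 + i * d) ->
    \sum_(i < p.+1) lam i * i < p.
  move=> s lam [_ Hap] Hs; rewrite ltnNge; apply/negP => HA.
  apply: Hap; move: Hs; rewrite /= sum_val => Hs.
  set L := \sum_(i < p.+1) lam i in Hs.
  set A := \sum_(i < p.+1) lam i * i in Hs HA.
  have HAL : A <= p * L by apply: sumA_le.
  have HL : 0 < L by case: (posnP L) => // L0; move: HAL; rewrite L0 muln0; lia.
  have Hpl : p * L.-1 = p * L - p by rewrite -subn1 mulnBr muln1.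
  have [mu [H1 H2]] := @realize p L.-1 (A - p) ltac:(lia).
  split; first nia.
  exists mu; rewrite sum_val H1 H2 Hs; nia.
have key : forall L1 A1 L2 A2, A1 < p -> A2 < p ->
    n0 * L1 + d * A1 = n0 * L2 + d * A2 -> L1 < L2 -> False.
  move=> L1 A1 L2 A2 H1 H2 He Hlt.
  have Hm : A1 - A2 < p.+1 by lia.
  apply: (Hmin (Ordinal Hm)).
  exists (fun i => if i == 0 then (L2 - L1).+1 else 0).
  have H0 : (ord0 : 'I_p.+1) != Ordinal Hm.
    apply/eqP => /(congr1 val) /=; nia.
  rewrite (bigD1 ord0) //= big1 ?addn0 /=; first nia.
  by move=> [[|k] Hk] /andP [_ Hi].
split; first by move=> s [].
move=> s Hs Hs0.
have [lam0 E0] := Hs.1.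
exists (\sum_(i < p.+1) lam0 i) => l'; split.
  move=> [lam [E El]]; subst l'.
  have A0 := Asmall _ _ Hs E0; have A1 := Asmall _ _ Hs E.
  rewrite sum_val in E0; rewrite sum_val in E.
  case: (ltngtP (\sum_(i < p.+1) lam i) (\sum_(i < p.+1) lam0 i)) => // Hc.
  - by exfalso; apply: (key _ _ _ _ A1 A0 _ Hc); rewrite -E -E0.
  - by exfalso; apply: (key _ _ _ _ A0 A1 _ Hc); rewrite -E -E0.
by move=> ->; exists lam0.
Qed.
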